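(* Let $P$ be a finite graded poset with unique minimal element $\hat0$ and rank function $\rho$ with $\rho(\hat0)=0$, and let $\theta$ be an equivalence relation on $P$ such that $\rho$ is constant on $\theta$-classes. Equip $P/\theta$ with the transitive closure $\preceq$ of the quotient relation $\leqslant_\theta$ (a graded partial order with rank $[p]\mapsto\rho(p)$ and unique minimal element $[\hat0]$). Suppose that for every $p\in P$, $$\sum_{[q]\preceq[p]}\ \sum_{r\in[q]}\mu_P(r)=\begin{cases}1 & \text{if } [p]=[\hat0],\\ 0 & \text{otherwise}.\end{cases}$$ Then $\mu_{P/\theta}([p])=\sum_{q\in[p]}\mu_P(q)$ for all $p\in P$, and $\chi_{P/\theta}(t)=\chi_P(t)$.
   Context: For a finite poset $P$ with unique minimal element $\hat0$, the Möbius function $\mu_P\colon P\to\mathbb Z$ is defined recursively by $\sum_{p\leqslant q}\mu_P(p)=\delta_{\hat0,q}$ for all $q\in P$. A poset is graded with rank function $\rho$ if $p<q\Rightarrow\rho(p)<\rho(q)$ and $p\lessdot q\Rightarrow\rho(q)=\rho(p)+1$; for graded $P$ with $\rho(\hat0)=0$, $\rho(P)$ denotes the maximal value of $\rho$, and the characteristic polynomial is $\chi_P(t)=\sum_{p\in P}\mu_P(p)t^{\rho(P)-\rho(p)}$. The quotient relation is $[p]\leqslant_\theta[q]$ iff there exist $p'\in[p]$, $q'\in[q]$ with $p'\leqslant q'$. *)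

(* Defs.v *)
From mathcomp Require Import all_boot all_order all_algebra.
Set Implicit Arguments. Unset Strict Implicit. Unset Printing Implicit Defensive.
Import GRing.Theory Num.Theory.
Local Open Scope ring_scope.

Section Posets.
Variable U : finType.
Implicit Types (le : rel U).

Definition is_partial_order le :=
  [/\ reflexive le, antisymmetric le & transitive le].

Definition covers le (p q : U) : bool :=
  [&& le p q, p != q & [forall r, (le p r && le r q) ==> (r == p) || (r == q)]].

Definition is_rank_function le (z : U) (rho : U -> nat) :=
  [/\ rho z = 0%N,
      forall p q, le p q -> p != q -> (rho p < rho q)%N &
      forall p q, covers le p q -> rho q = (rho p).+1].

(* Moebius function, defined by the recursion
   mu(z) = 1, mu(q) = - sum_{p < q} mu(p); the fuel #|U| suffices. *)
Fixpoint mobius_fuel le (z : U) (n : nat) (p : U) : int :=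
  match n with
  | 0 => 0
  | n'.+1 => if p == z then 1
             else - \sum_(r | le r p && (r != p)) mobius_fuel le z n' r
  end.

Definition mobius le (z : U) (p : U) : int := mobius_fuel le z #|U| p.

Definition poset_rank (rho : U -> nat) : nat := \max_(p : U) rho p.

Definition poset_charpoly le (z : U) (rho : U -> nat) : {poly int} :=
  \sum_(p : U) (mobius le z p)%:P * 'X^(poset_rank rho - rho p).
End Posets.

Section Quotient.
Variable T : finType.
Variable theta : rel T.

Definition classes : {set {set T}} := [set [set q | theta p q] | p in [set: T]].

Definition qtype := {A : {set T} | A \in classes}.

Definition cls (p : T) : qtype :=
  exist (fun A => A \in classes) [set q | theta p q] (imset_f _ (in_setT p)).

Definition qrel (le : rel T) : rel qtype :=
  fun A B => [exists p in val A, exists q in val B, le p q].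

(* its transitive closure (qrel is reflexive, so this is connect) *)
Definition qle (le : rel T) : rel qtype := connect (qrel le).

(* rank on the quotient: [p] |-> rho p (well defined when rho is constant
   on classes) *)
Definition qrank (rho : T -> nat) (A : qtype) : nat := \max_(p in val A) rho p.
End Quotient.

(* Main.v *)
Require Import Defs.
From mathcomp Require Import all_boot all_order all_algebra.
From mathcomp Require Import zify.
Import GRing.Theory Num.Theory.
Local Open Scope ring_scope.

Lemma mobius_unique (U : finType) (le : rel U) (z : U) (g : U -> int) :
  reflexive le -> transitive le -> antisymmetric le -> (forall p, le z p) ->
  (forall p, \sum_(r | le r p) g r = (p == z)%:R) ->
  forall p, mobius le z p = g p.
Proof.
move=> lr lt la lz H.
pose rk p := #|[set r | le r p && (r != p)]|.
have rklt : forall r p, le r p -> r != p -> (rk r < rk p)%N.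
  move=> r p hrp nrp; apply: proper_card; apply/properP; split.
    apply/subsetP=> s; rewrite !inE => /andP[hsr nsr].
    rewrite (lt _ _ _ hsr hrp) /=; apply/negP=> /eqP esp; subst s.
    by move/negP: nrp; apply; apply/eqP/la; rewrite hsr hrp.
  by exists r; rewrite !inE ?hrp ?nrp ?eqxx ?andbF.
have rkU : forall p, (rk p < #|U|)%N.
  move=> p; rewrite -cardsT; apply: proper_card; apply/properP; split.
    by apply/subsetP=> s; rewrite inE.
  by exists p; rewrite !inE ?eqxx ?andbF.
suff: forall n p, (rk p < n)%N -> mobius_fuel le z n p = g p.
  by move=> Hn p; apply: Hn.
elim=> [//|n IH] p hp /=.
case: eqP => [->|/eqP npz].
  have := H z; rewrite eqxx.
  rewrite (eq_bigl (fun r => r == z)) ?big_pred1_eq // => r.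
  apply/idP/eqP=> [hrz|->]; last exact: lr.
  by apply: la; rewrite hrz lz.
have := H p; rewrite (negbTE npz) (bigD1 p) //= => /eqP.
rewrite addr_eq0 => /eqP ->; congr (- _).
apply: eq_bigr => r /andP[hrp nrp]; apply: IH.
by have := rklt _ _ hrp nrp; lia.
Qed.
Set Implicit Arguments. Unset Strict Implicit.

Section Q.
Variables (T : finType) (theta : rel T).
Hypothesis eqth : equivalence_rel theta.

Lemma th_refl p : theta p p. Proof. exact: (eqth p p p).1. Qed.
Lemma th_trans p q x : theta p q -> theta p x = theta q x.
Proof. exact: (eqth p q x).2. Qed.

Lemma mem_cls p q : (q \in val (cls theta p)) = theta p q.
Proof. by rewrite /= inE. Qed.

Lemma cls_eq p q : theta p q -> cls theta p = cls theta q.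
Proof. by move=> h; apply: val_inj; apply/setP=> x; rewrite !inE; apply: th_trans. Qed.

Lemma cls_surj (A : qtype theta) : exists p, A = cls theta p.
Proof.
case: A => S HS; have := HS; case/imsetP=> p _ eS; exists p.
by apply: val_inj => /=.
Qed.

Lemma in_clsE (A : qtype theta) r : (r \in val A) = (cls theta r == A).
Proof.
have [p ->] := cls_surj A; apply/idP/eqP=> [h|<-].
  by rewrite mem_cls in h; rewrite (cls_eq h).
by rewrite mem_cls th_refl.
Qed.

Variable rho : T -> nat.
Hypothesis rhoc : forall p q, theta p q -> rho p = rho q.

Lemma qrank_in (A : qtype theta) r : r \in val A -> qrank rho A = rho r.
Proof.
rewrite in_clsE => /eqP <-; apply/eqP; rewrite eqn_leq; apply/andP; split.
  by apply/bigmax_leqP=> q; rewrite mem_cls => /rhoc ->.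
by apply: (leq_bigmax_cond (F := rho)); rewrite mem_cls th_refl.
Qed.

Variables (le : rel T) (z : T).
Hypothesis rhos : forall p q, le p q -> p != q -> (rho p < rho q)%N.

Lemma qrel_rank (A B : qtype theta) : qrel le A B -> (A == B) || (qrank rho A < qrank rho B)%N.
Proof.
case/existsP=> p /andP[pA /existsP[q /andP[qB hpq]]].
rewrite (qrank_in pA) (qrank_in qB).
have [epq|npq] := eqVneq p q.
  by subst q; rewrite in_clsE in pA; rewrite in_clsE in qB; rewrite -(eqP pA) -(eqP qB) eqxx.
by rewrite rhos ?orbT.
Qed.

Lemma qle_rank (A B : qtype theta) : qle le A B -> (A == B) || (qrank rho A < qrank rho B)%N.
Proof.
case/connectP=> s; elim: s A => [|x s IH] A /=; first by move=> _ ->; rewrite eqxx.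
case/andP=> hAx hp eB; have := IH x hp eB; have := qrel_rank hAx.
case/orP=> [/eqP ->//|h1]; case/orP=> [/eqP <-|h2]; first by rewrite h1 orbT.
by rewrite (ltn_trans h1 h2) orbT.
Qed.

End Q.

Theorem mainTheorem15 (T : finType) (le : rel T) (z : T) (rho : T -> nat)
    (theta : rel T) :
  is_partial_order le ->
  (forall p, le z p) ->
  is_rank_function le z rho ->
  equivalence_rel theta ->
  (forall p q, theta p q -> rho p = rho q) ->
  (forall p : T,
     \sum_(A : qtype theta | qle le A (cls theta p))
        \sum_(r in val A) mobius le z r
     = (cls theta p == cls theta z)%:R) ->
  (forall p : T,
     mobius (qle le) (cls theta z) (cls theta p)
     = \sum_(q in val (cls theta p)) mobius le z q)
  /\ poset_charpoly (qle le) (cls theta z) (qrank rho) = poset_charpoly le z rho.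
Proof.
move=> [lr la lt] lz [rz rhos rcov] eqth rhoc H.
pose g (A : qtype theta) := \sum_(r in val A) mobius le z r.
have HQ : forall A, mobius (qle le) (cls theta z) A = g A.
  apply: mobius_unique.
  - by move=> A; exact: connect0.
  - by move=> y x w; exact: connect_trans.
  - move=> A B /andP[h1 h2].
    have := qle_rank eqth rhoc rhos h1; have := qle_rank eqth rhoc rhos h2.
    case/orP=> [/eqP ->//|l1]; case/orP=> [/eqP ->//|l2].
    by have := ltn_trans l1 l2; rewrite ltnn.
  - move=> A; have [p ->] := cls_surj A; apply: connect1.
    apply/existsP; exists z; rewrite mem_cls (th_refl eqth) //=.
    by apply/existsP; exists p; rewrite mem_cls (th_refl eqth) // lz.
  - by move=> B; have [p ->] := cls_surj B; exact: H p.
split; first by move=> p; rewrite HQ.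
have rankE : poset_rank (qrank (theta:=theta) rho) = poset_rank rho.
  rewrite /poset_rank; apply/eqP; rewrite eqn_leq; apply/andP; split.
    apply/bigmax_leqP => A _; have [p ->] := cls_surj A.
    rewrite (qrank_in eqth rhoc (r := p)); last by rewrite mem_cls (th_refl eqth).
    exact: (leq_bigmax_cond (F := rho)).
  apply/bigmax_leqP => p _.
  rewrite -(qrank_in eqth rhoc (A := cls theta p) (r := p)); last by rewrite mem_cls (th_refl eqth).
  exact: (leq_bigmax_cond (F := qrank rho)).
rewrite /poset_charpoly rankE (partition_big (fun p => cls theta p) xpredT) //=.
apply: eq_bigr => A _; rewrite HQ /g raddf_sum mulr_suml.
apply: eq_big => [r|r hr]; first by rewrite in_clsE.
by rewrite (qrank_in eqth rhoc hr).
Qed.
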